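(* Let $Q$ be a hierarchical Boolean self-join-free conjunctive query. Then for every database $D$, a minimal-length formula equivalent to $\mathrm{Prov}(Q,D)$ can be computed in polynomial time in $|D|$; in particular $\mathrm{FACT}(Q)$ is in PTIME.
   Context: Let $Q=\exists\vec x\,(R_1(\vec x_1)\wedge\cdots\wedge R_m(\vec x_m))$ be a Boolean self-join-free conjunctive query. $Q$ is hierarchical if for any two variables $x,y$, with $\mathrm{at}(x)$ the set of atoms containing $x$, one has $\mathrm{at}(x)\subseteq\mathrm{at}(y)$, $\mathrm{at}(x)\supseteq\mathrm{at}(y)$, or $\mathrm{at}(x)\cap\mathrm{at}(y)=\emptyset$. For a database $D$ whose tuples are identified with distinct Boolean variables, a witness is an assignment $\theta$ of the query variables with $R_i(\theta(\vec x_i))\in D$ for all $i$, and $\mathrm{Prov}(Q,D)=\bigvee_\theta\bigwedge_i R_i(\theta(\vec x_i))$. For a formula $\varphi$ built with $\wedge,\vee$, $\mathrm{len}(\varphi)$ is the number of variable occurrences and $\mathrm{var}(\varphi)$ the set of variables. $(D,k)\in\mathrm{FACT}(Q)$ iff some $\varphi'\equiv\mathrm{Prov}(Q,D)$ has $\mathrm{len}(\varphi')\le|\mathrm{var}(\varphi')|+k$; $Q$ is fixed. *)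

(* Defs.v *)
From mathcomp Require Import all_boot.
Set Implicit Arguments. Unset Strict Implicit. Unset Printing Implicit Defensive.

(* Atom i uses relation symbol i (all distinct: self-join-free by
   construction); its argument list is a sequence of query variables (nats). *)
Record query := Query { atoms : seq (seq nat) }.

Definition natoms (Q : query) : nat := size (atoms Q).
Definition atom (Q : query) (i : nat) : seq nat := nth [::] (atoms Q) i.

Definition at_ (Q : query) (x : nat) : pred nat :=
  fun i => (i < natoms Q) && (x \in atom Q i).

Definition hierarchical (Q : query) : Prop :=
  forall x y : nat,
    (forall i, at_ Q x i -> at_ Q y i) \/
    (forall i, at_ Q y i -> at_ Q x i) \/
    (forall i, ~ (at_ Q x i /\ at_ Q y i)).

(* A fact R_i(c) is a pair (i, c); constants are nats.  A database is a
   duplicate-free list of facts; each fact is its own Boolean variable. *)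
Definition fact := (nat * seq nat)%type.
Definition database := seq fact.

(* Formulas built with /\ and \/ over Boolean variables (facts); the
   constants true/false (of length 0) are included so that Prov of an
   instance with no witness (= false) is also representable. *)
Inductive form :=
| FVar of fact
| FAnd of form & form
| FOr of form & form
| FTrue
| FFalse.

Fixpoint feval (nu : fact -> bool) (phi : form) : bool :=
  match phi with
  | FVar f => nu f
  | FAnd a b => feval nu a && feval nu b
  | FOr a b => feval nu a || feval nu b
  | FTrue => true
  | FFalse => false
  end.

Fixpoint occ (phi : form) : seq fact :=
  match phi with
  | FVar f => [:: f]
  | FAnd a b | FOr a b => occ a ++ occ b
  | FTrue | FFalse => [::]
  end.

Definition len (phi : form) : nat := size (occ phi).
Definition nvar (phi : form) : nat := size (undup (occ phi)).

Definition prov_holds (Q : query) (D : database) (nu : fact -> bool) : Prop :=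
  exists theta : nat -> nat,
    forall i, i < natoms Q ->
      let f := (i, map theta (atom Q i)) in f \in D /\ nu f.

Definition equiv_prov (Q : query) (D : database) (phi : form) : Prop :=
  forall nu : fact -> bool, feval nu phi <-> prov_holds Q D nu.

Definition minimal_prov (Q : query) (D : database) (phi : form) : Prop :=
  equiv_prov Q D phi /\
  forall psi, equiv_prov Q D psi -> len phi <= len psi.

Definition FACT (Q : query) (D : database) (k : nat) : Prop :=
  exists phi, equiv_prov Q D phi /\ len phi <= nvar phi + k.

(* Data are binary trees; unit-cost commands (a standard reasonable model:
   polynomially equivalent to Turing machines). *)
Inductive tree := TNil | TCons of tree & tree.

Fixpoint tree_size (t : tree) : nat :=
  match t with TNil => 1 | TCons a b => (tree_size a + tree_size b).+1 end.

Inductive expr :=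
| EVar of nat
| ENil
| ECons of expr & expr
| EHd of expr
| ETl of expr.

Inductive cmd :=
| CAssign of nat & expr
| CSeq of cmd & cmd
| CWhile of expr & cmd.

Definition store := nat -> tree.

Fixpoint eeval (s : store) (e : expr) : tree :=
  match e with
  | EVar x => s x
  | ENil => TNil
  | ECons a b => TCons (eeval s a) (eeval s b)
  | EHd a => match eeval s a with TCons l _ => l | TNil => TNil end
  | ETl a => match eeval s a with TCons _ r => r | TNil => TNil end
  end.

Definition upd (s : store) (x : nat) (v : tree) : store :=
  fun y => if y == x then v else s y.

Inductive exec : cmd -> store -> nat -> store -> Prop :=
| ExAssign s x e : exec (CAssign x e) s 1 (upd s x (eeval s e))
| ExSeq c1 c2 s t1 s1 t2 s2 :
    exec c1 s t1 s1 -> exec c2 s1 t2 s2 -> exec (CSeq c1 c2) s (t1 + t2) s2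
| ExWhileF e c s : eeval s e = TNil -> exec (CWhile e c) s 1 s
| ExWhileT e c s t1 s1 t2 s2 :
    eeval s e <> TNil -> exec c s t1 s1 -> exec (CWhile e c) s1 t2 s2 ->
    exec (CWhile e c) s (t1 + t2).+1 s2.

Definition init_store (inp : tree) : store :=
  fun x => if x == 0 then inp else TNil.

Definition runs (p : cmd) (inp : tree) (t : nat) (out : tree) : Prop :=
  exists s', exec p (init_store inp) t s' /\ s' 0 = out.

Fixpoint enc_list (l : seq tree) : tree :=
  match l with [::] => TNil | x :: r => TCons x (enc_list r) end.

Definition enc_bool (b : bool) : tree := if b then TCons TNil TNil else TNil.

Fixpoint bits (fuel n : nat) : seq bool :=
  match fuel with
  | 0 => [::]
  | fuel'.+1 => if n == 0 then [::] else odd n :: bits fuel' n./2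
  end.

Definition enc_nat (n : nat) : tree := enc_list (map enc_bool (bits n n)).

Definition enc_fact (f : fact) : tree :=
  TCons (enc_nat f.1) (enc_list (map enc_nat f.2)).

Definition enc_db (D : database) : tree := enc_list (map enc_fact D).

Fixpoint enc_form (phi : form) : tree :=
  match phi with
  | FVar f => TCons (enc_nat 0) (enc_fact f)
  | FAnd a b => TCons (enc_nat 1) (TCons (enc_form a) (enc_form b))
  | FOr a b => TCons (enc_nat 2) (TCons (enc_form a) (enc_form b))
  | FTrue => TCons (enc_nat 3) TNil
  | FFalse => TCons (enc_nat 4) TNil
  end.

(* Main.v *)
From HB Require Import structures.
Require Import Defs.
From mathcomp Require Import all_boot zify.
Set Implicit Arguments. Unset Strict Implicit. Unset Printing Implicit Defensive.

Definition sat (c : cmd) (s : store) (P : nat -> store -> Prop) :=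
  exists t s', exec c s t s' /\ P t s'.

Lemma sat_weak c s (P P' : nat -> store -> Prop) :
  (forall t s', P t s' -> P' t s') -> sat c s P -> sat c s P'.
Proof. by move=> H [t [s' [E HP]]]; exists t, s'; split => //; apply: H. Qed.

Lemma sat_assign x e s (P : nat -> store -> Prop) :
  P 1 (upd s x (eeval s e)) -> sat (CAssign x e) s P.
Proof. by move=> H; exists 1, (upd s x (eeval s e)); split => //; constructor. Qed.

Lemma sat_seq c1 c2 s (P : nat -> store -> Prop) :
  sat c1 s (fun t1 s1 => sat c2 s1 (fun t2 s2 => P (t1 + t2) s2)) ->
  sat (CSeq c1 c2) s P.
Proof.
move=> [t1 [s1 [E1 [t2 [s2 [E2 HP]]]]]].
by exists (t1 + t2), s2; split => //; econstructor; eauto.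
Qed.

Lemma sat_seqA x e c s (P : nat -> store -> Prop) :
  sat c (upd s x (eeval s e)) (fun t s' => P t.+1 s') ->
  sat (CSeq (CAssign x e) c) s P.
Proof. by move=> H; apply: sat_seq; apply: sat_assign. Qed.

Lemma sat_while e c (I : store -> Prop) (phi : store -> nat) s :
  I s ->
  (forall s, I s -> eeval s e <> TNil ->
     sat c s (fun t s' => I s' /\ t.+1 + phi s' <= phi s)) ->
  sat (CWhile e c) s (fun t s' => I s' /\ eeval s' e = TNil /\ t <= phi s + 1).
Proof.
move=> Is Hb.
have [n Hn] : exists n, phi s <= n by exists (phi s).
elim: n s Hn Is => [|n IH] s Hn Is.
  case E: (eeval s e) => [|l r].
    by exists 1, s; split; [exact: ExWhileF|split; [exact: Is|split; [exact: E|lia]]].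
  have [t1 [s1 [E1 [I1 Hc]]]] := Hb s Is (ltac:(by rewrite E)).
  lia.
case E: (eeval s e) => [|l r].
  by exists 1, s; split; [exact: ExWhileF|split; [exact: Is|split; [exact: E|lia]]].
have [t1 [s1 [E1 [I1 Hc]]]] := Hb s Is (ltac:(by rewrite E)).
have [t2 [s2 [E2 [I2 [H2 Ht2]]]]] := IH s1 ltac:(lia) I1.
exists (t1 + t2).+1, s2; split; first by econstructor; eauto; rewrite E.
split => //; split => //; lia.
Qed.

Definition IfT (f : nat) (e : expr) (c : cmd) : cmd :=
  CSeq (CAssign f e) (CWhile (EVar f) (CSeq c (CAssign f ENil))).

Lemma sat_if f e c s (P : nat -> store -> Prop) :
  (eeval s e <> TNil ->
     sat c (upd s f (eeval s e)) (fun t s1 => P (t + 4) (upd s1 f TNil))) ->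
  (eeval s e = TNil -> P 2 (upd s f TNil)) ->
  sat (IfT f e c) s P.
Proof.
move=> H1 H2.
case E: (eeval s e) => [|l r].
  exists 2, (upd s f TNil); split; last by apply: H2.
  have -> : 2 = 1 + 1 by [].
  econstructor; first by constructor.
  rewrite E. constructor. by rewrite /= /upd eqxx.
have [t1 [s1 [E1 HP]]] := H1 ltac:(by rewrite E).
exists (1 + ((t1 + 1) + 1).+1), (upd s1 f TNil); split; last first.
  by have -> : 1 + ((t1 + 1) + 1).+1 = t1 + 4 by lia.
econstructor; first by constructor.
rewrite E in E1 *; econstructor.
- by rewrite /= /upd eqxx.
- econstructor; first exact: E1. by constructor.
- apply: ExWhileF. by rewrite /= /upd eqxx.
Qed.


Fixpoint teqb (a b : tree) : bool :=
  match a, b with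
  | TNil, TNil => true
  | TCons a1 a2, TCons b1 b2 => teqb a1 b1 && teqb a2 b2
  | _, _ => false
  end.
Lemma teqbP : Equality.axiom teqb.
Proof.
elim=> [|a1 IH1 a2 IH2] [|b1 b2] /=; try by constructor.
case: IH1 => [->|h]; last by constructor; case.
case: IH2 => [->|h]; last by constructor; case.
by constructor.
Qed.
HB.instance Definition _ := hasDecEq.Build tree teqbP.

Definition TT := TCons TNil TNil.
Definition ETT := ECons ENil ENil.

Fixpoint stsz (t : tree) : nat :=
  match t with
  | TCons p rest => match p with TCons a _ => tree_size a | TNil => 0 end + stsz rest
  | TNil => 0
  end.

Definition encps (ps : seq (tree * tree)) : tree :=
  enc_list (map (fun p => TCons p.1 p.2) ps).

Notation rST := 2. Notation rPR := 4. Notation rA := 6. Notation rB := 8.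
Notation rZ := 10. Notation rR := 12. Notation rF := 14.
Arguments upd s x v y /.
Definition teq_temps : pred nat := fun q => q \in [:: 2; 4; 6; 8; 10; 12; 14].

Definition TEQbody : cmd :=
  CSeq (CAssign rPR (EHd (EVar rST)))
 (CSeq (CAssign rST (ETl (EVar rST)))
 (CSeq (CAssign rA (EHd (EVar rPR)))
 (CSeq (CAssign rB (ETl (EVar rPR)))
 (CSeq (CAssign rZ ETT)
 (CSeq (IfT rF (EVar rA) (IfT rF (EVar rB)
          (CSeq (CAssign rST (ECons (ECons (EHd (EVar rA)) (EHd (EVar rB)))
                                (ECons (ECons (ETl (EVar rA)) (ETl (EVar rB))) (EVar rST))))
                (CAssign rZ ENil))))
 (CSeq (IfT rF (EVar rA) (IfT rF (EVar rZ) (CAssign rR ENil)))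
       (IfT rF (EVar rB) (IfT rF (EVar rZ) (CAssign rR ENil))))))))).

Definition TEQ (x y : nat) : cmd :=
  CSeq (CAssign rST (ECons (ECons (EVar x) (EVar y)) ENil))
 (CSeq (CAssign rR ETT)
       (CWhile (EVar rST) TEQbody)).

Definition frame (W : pred nat) (s s' : store) := forall q, ~~ W q -> s' q = s q.

Lemma frame_refl (W : pred nat) s : frame W s s. Proof. by []. Qed.
Lemma frame_trans (W : pred nat) s1 s2 s3 : frame W s1 s2 -> frame W s2 s3 -> frame W s1 s3.
Proof. by move=> h1 h2 q hq; rewrite h2 // h1. Qed.
Lemma frame_upd (W : pred nat) s x v : W x -> frame W s (upd s x v).
Proof. by move=> hx q hq; rewrite /upd; case: eqP => // e; subst; rewrite hx in hq. Qed.
Lemma frame_mono (W W' : pred nat) s s' : (forall q, W q -> W' q) -> frame W s s' -> frame W' s s'.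
Proof. move=> h f q hq; apply: f; apply: contra hq; exact: h. Qed.

Lemma upd_same s x v : upd s x v x = v. Proof. by rewrite /upd eqxx. Qed.
Lemma upd_other s x y v : y != x -> upd s x v y = s y.
Proof. by rewrite /upd => /negbTE ->. Qed.

Lemma encps_nil ps : encps ps = TNil -> ps = [::].
Proof. by case: ps. Qed.

Definition TEQpost s (a0 b0 : tree) ps (t : nat) s' :=
  frame teq_temps s s' /\ t <= 45 /\
    (exists nw, s' rST = encps (nw ++ ps) /\
       stsz (s' rST) + 1 <= stsz (s rST) /\
       ((s' rR = s rR /\ (a0 == b0) = all (fun p => p.1 == p.2) nw) \/
        (s' rR = TNil /\ a0 != b0))).

Lemma frame_updR (W : pred nat) s s' x v : frame W s s' -> W x -> frame W s (upd s' x v).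
Proof. by move=> h hx q hq; rewrite /= ifN ?h //; apply: contraNneq hq => ->. Qed.
Ltac frm := repeat (apply: frame_updR; last by compute); exact: frame_refl.

Ltac step := match goal with
 | |- sat (CSeq (CAssign _ _) _) _ _ => apply: sat_seqA
 | |- sat (CSeq _ _) _ _ => apply: sat_seq
 | |- sat (CAssign _ _) _ _ => apply: sat_assign
 | |- sat (IfT _ _ _) _ _ => apply: sat_if; simpl;
        [ let H := fresh "H" in intro H; try (by case: (H erefl))
        | let H := fresh "H" in intro H; try (discriminate H) ]
 end; rewrite /=.

Lemma TEQbody_spec s a0 b0 ps :
  s rST = encps ((a0, b0) :: ps) ->
  sat TEQbody s (TEQpost s a0 b0 ps).
Proof.
move=> Hst.
rewrite /TEQbody.
do 5 step. rewrite Hst /=.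
case: a0 Hst => [|a1 a2] Hst; case: b0 Hst => [|b1 b2] Hst; repeat step.
- split; [frm|]. split; [lia|]. exists [::]; split => //.
  split; first by rewrite Hst /=; lia. by left.
- split; [frm|]. split; [lia|]. exists [::]; split => //.
  split; first by rewrite Hst /=; lia. by right.
- split; [frm|]. split; [lia|]. exists [::]; split => //.
  split; first by rewrite Hst /=; lia. by right.
- split; [frm|]. split; [lia|]. exists [:: (a1,b1); (a2,b2)]; split => //.
  split; first by rewrite Hst /=; lia. left; split => //=. by rewrite andbT.
Qed.

Lemma TEQ_spec x y s : ~~ teq_temps x -> ~~ teq_temps y ->
  sat (TEQ x y) s (fun t s' => s' rR = enc_bool (s x == s y) /\
     frame teq_temps s s' /\ t <= 50 * tree_size (s x) + 3).
Proof.
move=> hx hy.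
rewrite /TEQ; apply: sat_seqA; apply: sat_seqA.
set s1 := upd _ rR _.
have hx1 : s1 x = s x by rewrite /s1 /= !ifN //; apply: contraNneq hx => ->.
have hy1 : s1 y = s y by rewrite /s1 /= !ifN //; apply: contraNneq hy => ->.
pose Inv (s' : store) := frame teq_temps s s' /\ exists ps, s' rST = encps ps /\
   ((s' rR = TT /\ ((s x == s y) = all (fun p => p.1 == p.2) ps)) \/
    (s' rR = TNil /\ s x != s y)).
apply: sat_weak; last first.
  apply: (@sat_while _ _ Inv (fun s' => 50 * stsz (s' rST))).
    split; first by rewrite /s1; frm.
    exists [:: (s x, s y)]; split; first by rewrite /s1 /=.
    by left; split => //=; rewrite andbT.
  move=> s2 [fr2 [ps [Hst Hr]]] hne.
  case: ps Hst Hr => [|[a0 b0] ps] Hst Hr; first by rewrite /= Hst in hne.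
  apply: sat_weak; last by apply: TEQbody_spec; exact: Hst.
  move=> t s3 [fr3 [ht [nw [Hst3 [Hsz Hcase]]]]].
  split; last by lia.
  split; first exact: frame_trans fr2 fr3.
  exists (nw ++ ps); split => //.
  case: Hcase => [[e1 e2]|[e1 e2]]; case: Hr => [[r1 r2]|[r1 r2]].
  - left; split; first by rewrite e1.
    by rewrite r2 /= e2 all_cat.
  - right; by rewrite e1.
  - right; split => //. move: r2 => /=. rewrite (negbTE e2) /=. by move=> ->.
  - by right.
move=> t s' [[fr [ps [Hst Hr]]] [Hnil ht]].
have E : ps = [::] by apply: encps_nil; rewrite -Hst. subst ps.
split; last first.
  split; first by move=> q hq; rewrite fr // /s1 /= !ifN //; apply: contraNneq hq => ->.
  have : stsz (s1 rST) = tree_size (s x) by rewrite /s1 /= addn0.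
  lia.
case: Hr => [[r1 r2]|[r1 r2]]; first by rewrite r1 r2.
by rewrite r1 (negbTE r2).
Qed.

Definition mem_temps : pred nat := fun q => teq_temps q || (q \in [:: 16; 18; 20]).

Definition MEM (x l : nat) : cmd :=
  CSeq (CAssign 16 (EVar l))
 (CSeq (CAssign 18 ENil)
  (CWhile (EVar 16)
    (CSeq (CAssign 20 (EHd (EVar 16)))
    (CSeq (CAssign 16 (ETl (EVar 16)))
    (CSeq (TEQ 20 x)
          (IfT 14 (EVar 12) (CAssign 18 ETT))))))).

Fixpoint lsum (t : tree) : nat :=
  match t with TCons e r => 50 * tree_size e + 11 + lsum r | TNil => 0 end.

Lemma frame_get (W : pred nat) s s' q : frame W s s' -> ~~ W q -> s' q = s q.
Proof. by move=> h; apply: h. Qed.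

Lemma MEM_spec x l s L : ~~ mem_temps x -> ~~ mem_temps l -> s l = enc_list L ->
  sat (MEM x l) s (fun t s' => s' 18 = enc_bool (s x \in L) /\
     frame mem_temps s s' /\ t <= lsum (enc_list L) + 3).
Proof.
move=> hx hl hL.
rewrite /MEM; apply: sat_seqA; apply: sat_seqA.
set s1 := upd _ 18 _.
pose Inv (s2 : store) := frame mem_temps s s2 /\ exists L1 L2, L = L1 ++ L2 /\
   s2 16 = enc_list L2 /\ s2 18 = enc_bool (s x \in L1).
apply: sat_weak; last first.
  apply: (@sat_while _ _ Inv (fun s2 => lsum (s2 16))).
    split; first by rewrite /s1; frm.
    by exists [::], L; rewrite /s1 /= hL.
  move=> s2 [fr2 [L1 [L2 [eL [h16 h18]]]]] hne.
  case: L2 eL h16 => [|e L2] eL h16; first by rewrite /= h16 in hne.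
  apply: sat_seqA; apply: sat_seqA.
  apply: sat_seq.
  apply: sat_weak; last first.
    by apply: TEQ_spec => //; apply: contra hx => h; rewrite /mem_temps h.
  move=> t1 s3 [r3 [fr3 ht3]].
  move: ht3; rewrite /= h16 /= => ht3.
  have e3 : s3 18 = enc_bool (s x \in L1).
    by rewrite (frame_get fr3) //= h18.
  have x3 : s3 x = s x.
    rewrite (frame_get fr3); last by apply: contra hx => h; rewrite /mem_temps h.
    rewrite /= !ifN; first exact: (frame_get fr2).
    - by apply: contraNneq hx => ->.
    - by apply: contraNneq hx => ->.
  have e16 : s3 16 = enc_list L2 by rewrite (frame_get fr3) //= h16.
  have n16 : x != 16 by apply: contraNneq hx => ->.
  have n20 : x != 20 by apply: contraNneq hx => ->.
  have x2 : s2 x = s x by apply: (frame_get fr2).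
  move: r3; rewrite /= h16 /= (negbTE n16) (negbTE n20) x2 => r3.
  have frA : frame mem_temps s s3.
    apply: frame_trans; last first.
      by apply: frame_mono fr3 => q hq; rewrite /mem_temps hq.
    apply: frame_updR; last by []. apply: frame_updR; last by []. exact: fr2.
  apply: sat_if.
    move=> hr. rewrite /= r3 in hr.
    have ee : e == s x by move: hr; case: (e == s x).
    apply: sat_assign.
    split; last first. rewrite /= e16 /=. lia.
    split. repeat (apply: frame_updR; last by []); exact: frA.
    exists (L1 ++ [:: e]), L2; split; first by rewrite eL -catA.
    split; first by rewrite /= e16.
    by rewrite /= mem_cat inE eq_sym ee orbT.
  move=> hr. rewrite /= r3 in hr.
  have ee : (e == s x) = false by move: hr; case: (e == s x).
  split; last first. rewrite /= e16 /=. lia.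
  split. repeat (apply: frame_updR; last by []); exact: frA.
  exists (L1 ++ [:: e]), L2; split; first by rewrite eL -catA.
  split; first by rewrite /= e16.
  by rewrite /= e3 mem_cat inE eq_sym ee orbF.
move=> t s' [[fr [L1 [L2 [eL [h16 h18]]]]] [Hnil ht]].
case: L2 eL h16 => [|? ?] eL h16; last by rewrite /= h16 in Hnil.
rewrite cats0 in eL; subst L1.
split; first exact: h18.
split; first by move=> q hq; apply: fr.
move: ht; rewrite /s1 /= hL. lia.
Qed.

Fixpoint decn (t : tree) : nat :=
  match t with TCons b r => (b != TNil) + 2 * decn r | TNil => 0 end.

Lemma bits_dec fuel n : n <= fuel -> decn (enc_list (map enc_bool (bits fuel n))) = n.
Proof.
elim: fuel n => [|f IH] n hn /=; first by case: n hn.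
case: eqP => [->|hn0] //=.
have hd := odd_double_half n.
rewrite -mul2n in hd.
rewrite IH; last by move: hd hn0 hn; case: (odd n) => /=; lia.
move: hd; case: (odd n) => /=; lia.
Qed.

Lemma enc_nat_inj : injective enc_nat.
Proof. by move=> m n e; rewrite -(bits_dec (leqnn m)) -(bits_dec (leqnn n)) -/(enc_nat m) e. Qed.

Lemma enc_list_inj : injective enc_list.
Proof. by elim=> [|a l IH] [|b l'] //= [-> /IH ->]. Qed.

Lemma enc_fact_inj : injective enc_fact.
Proof.
move=> [i l] [j l'] [/enc_nat_inj -> /enc_list_inj /(inj_map enc_nat_inj) ->] //.
Qed.

Lemma enc_nat0 : enc_nat 0 = TNil. Proof. by []. Qed.

Definition isF (p : form) := if p is FFalse then true else false.
Definition isT (p : form) := if p is FTrue then true else false.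

Definition sand (a b : form) : form :=
  if isF a then FFalse else if isF b then FFalse else
  if isT a then b else if isT b then a else FAnd a b.
Definition sor (a b : form) : form :=
  if isT a then FTrue else if isT b then FTrue else
  if isF a then b else if isF b then a else FOr a b.

Lemma feval_sand nu a b : feval nu (sand a b) = feval nu a && feval nu b.
Proof. by case: a; case: b => *; rewrite /sand /= ?andbT ?andbF. Qed.
Lemma feval_sor nu a b : feval nu (sor a b) = feval nu a || feval nu b.
Proof. by case: a; case: b => *; rewrite /sor /= ?orbT ?orbF. Qed.

Lemma sand_cases a b : [\/ sand a b = FFalse, sand a b = a, sand a b = b | sand a b = FAnd a b].
Proof. by case: a; case: b => *; rewrite /sand /=; auto using Or41, Or42, Or43, Or44. Qed.
Lemma sor_cases a b : [\/ sor a b = FTrue, sor a b = a, sor a b = b | sor a b = FOr a b].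
Proof. by case: a; case: b => *; rewrite /sor /=; auto using Or41, Or42, Or43, Or44. Qed.
Lemma occ_sand a b : subseq (occ (sand a b)) (occ a ++ occ b).
Proof.
case: (sand_cases a b) => ->;
  first [exact: subseq_refl | exact: prefix_subseq | exact: suffix_subseq | exact: sub0seq].
Qed.
Lemma occ_sor a b : subseq (occ (sor a b)) (occ a ++ occ b).
Proof.
case: (sor_cases a b) => ->;
  first [exact: subseq_refl | exact: prefix_subseq | exact: suffix_subseq | exact: sub0seq].
Qed.

Inductive plan :=
| PLeaf of nat
| PAnd of plan & plan
| POr of nat & plan
| PTrue.

Definition updf (rho : nat -> nat) (x a : nat) : nat -> nat :=
  fun y => if y == x then a else rho y.

Fixpoint evalp (Q : query) (D : database) (dom : seq nat) (p : plan) (rho : nat -> nat) : form :=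
  match p with
  | PLeaf i => let f := (i, map rho (atom Q i)) in if f \in D then FVar f else FFalse
  | PAnd p1 p2 => sand (evalp Q D dom p1 rho) (evalp Q D dom p2 rho)
  | POr x p1 => foldl (fun acc a => sor (evalp Q D dom p1 (updf rho x a)) acc) FFalse dom
  | PTrue => FTrue
  end.

Definition cnt (Q : query) (y : nat) : nat := count (at_ Q y) (iota 0 (natoms Q)).

Definition pickmax (Q : query) (l : seq nat) : nat :=
  foldr (fun y b => if cnt Q b <= cnt Q y then y else b) (head 0 l) l.

Definition leaves (G : seq nat) : plan := foldr (fun i p => PAnd (PLeaf i) p) PTrue G.

Definition ground (Q : query) (V : seq nat) (i : nat) := all (fun y => y \in V) (atom Q i).

Fixpoint mkplan (Q : query) (fuel : nat) (S V : seq nat) : plan :=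
  match fuel with
  | 0 => PTrue
  | f.+1 =>
    let G := [seq i <- S | ground Q V i] in
    let R := [seq i <- S | ~~ ground Q V i] in
    let U := [seq y <- flatten (map (atom Q) R) | y \notin V] in
    if U is [::] then leaves G else
    let x := pickmax Q U in
    PAnd (leaves G)
      (PAnd (POr x (mkplan Q f [seq i <- R | x \in atom Q i] (x :: V)))
            (mkplan Q f [seq i <- R | x \notin atom Q i] V))
  end.

Definition provS (Q : query) (D : database) (S V : seq nat) (rho : nat -> nat) (nu : fact -> bool) :=
  exists theta : nat -> nat, (forall y, y \in V -> theta y = rho y) /\
    forall i, i \in S -> (i, map theta (atom Q i)) \in D /\ nu (i, map theta (atom Q i)).

Fixpoint cf (p : form) : bool :=
  match p with
  | FVar _ => true
  | FAnd a b | FOr a b => cf a && cf b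
  | _ => false
  end.
Definition simple (p : form) := isT p || isF p || cf p.

Lemma simple_cf a : simple a -> isT a = false -> isF a = false -> cf a.
Proof. by rewrite /simple => h ht hf; move: h; rewrite ht hf. Qed.
Lemma simple_sand a b : simple a -> simple b -> simple (sand a b).
Proof.
move=> sa sb; rewrite /sand.
case ha: (isF a) => //; case hb: (isF b) => //; case ta: (isT a) => //; case tb: (isT b) => //.
by rewrite /simple /= (simple_cf sa) // (simple_cf sb).
Qed.
Lemma simple_sor a b : simple a -> simple b -> simple (sor a b).
Proof.
move=> sa sb; rewrite /sor.
case ta: (isT a) => //; case tb: (isT b) => //; case ha: (isF a) => //; case hb: (isF b) => //.
by rewrite /simple /= (simple_cf sa) // (simple_cf sb).
Qed.

Lemma leaves_feval Q D dom G rho nu :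
  feval nu (evalp Q D dom (leaves G) rho) <->
  (forall i, i \in G -> (i, map rho (atom Q i)) \in D /\ nu (i, map rho (atom Q i))).
Proof.
elim: G => [|i G IH] /=; first by split => // _ i.
rewrite feval_sand; split.
  move=> /andP [h1 /IH h2] j; rewrite inE => /orP [/eqP ->|hj]; last exact: h2.
  by move: h1; case: ifP => //= h3 h4.
move=> h; apply/andP; split; last by apply/IH => j hj; apply: h; rewrite inE hj orbT.
by have [h1 h2] := h i (mem_head _ _); rewrite h1.
Qed.

Lemma leaves_occ Q D dom G rho f :
  f \in occ (evalp Q D dom (leaves G) rho) -> f.1 \in G /\ f.2 = map rho (atom Q f.1).
Proof.
elim: G => [|i G IH] //=.
move=> /(mem_subseq (occ_sand _ _)); rewrite mem_cat => /orP [|h].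
  by case: ifP => //= _; rewrite inE => /eqP -> /=; rewrite mem_head.
by have [h1 h2] := IH h; rewrite inE h1 orbT.
Qed.

Lemma leaves_uniq Q D dom G rho : uniq G -> uniq (occ (evalp Q D dom (leaves G) rho)).
Proof.
elim: G => [|i G IH] //= /andP [hi hG].
apply: (subseq_uniq (occ_sand _ _)); rewrite cat_uniq IH // andbT.
case: ifP => //= _; apply/hasPn => f /leaves_occ [h _]; rewrite ?mem_seq1 //.
by apply/negP => /eqP hf; rewrite hf /= in h; rewrite h in hi.
Qed.

Lemma leaves_simple Q D dom G rho : simple (evalp Q D dom (leaves G) rho).
Proof.
elim: G => [|i G IH] //=; apply: simple_sand => //.
by case: ifP.
Qed.

Lemma foldl_sor_feval nu (g : nat -> form) z l :
  feval nu (foldl (fun acc a => sor (g a) acc) z l) = feval nu z || has (fun a => feval nu (g a)) l.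
Proof.
elim: l z => [|a l IH] z /=; first by rewrite orbF.
by rewrite IH feval_sor orbA (orbC (feval nu (g a))).
Qed.

Lemma foldl_sor_simple (g : nat -> form) z l :
  simple z -> (forall a, a \in l -> simple (g a)) ->
  simple (foldl (fun acc a => sor (g a) acc) z l).
Proof.
elim: l z => [|a l IH] z //= hz hg.
apply: IH => [|b hb]; last by apply: hg; rewrite inE hb orbT.
by apply: simple_sor => //; apply: hg; rewrite mem_head.
Qed.

Lemma foldl_sor_occ (g : nat -> form) z l f :
  f \in occ (foldl (fun acc a => sor (g a) acc) z l) ->
  f \in occ z \/ exists2 a, a \in l & f \in occ (g a).
Proof.
elim: l z => [|a l IH] z /=; first by left.
move=> /IH [|[b hb hf]]; last by right; exists b => //; rewrite inE hb orbT.
move=> /(mem_subseq (occ_sor _ _)); rewrite mem_cat => /orP [h|h]; last by left.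
by right; exists a => //; rewrite mem_head.
Qed.

Lemma foldl_sor_uniq (g : nat -> form) (K : fact -> nat) z l :
  uniq (occ z) -> uniq l -> (forall f, f \in occ z -> K f \notin l) ->
  (forall a, a \in l -> uniq (occ (g a)) /\ forall f, f \in occ (g a) -> K f = a) ->
  uniq (occ (foldl (fun acc a => sor (g a) acc) z l)).
Proof.
elim: l z => [|a l IH] z //= hz /andP [hal hl] hK hg.
have [ga gK] := hg a (mem_head _ _).
apply: IH => //.
- apply: (subseq_uniq (occ_sor _ _)); rewrite cat_uniq ga hz andbT /=.
  apply/hasPn => f hf; apply/negP => hfa.
  by have := hK f hf; rewrite (gK f hfa) mem_head.
- move=> f /(mem_subseq (occ_sor _ _)); rewrite mem_cat => /orP [h|h].
    by rewrite (gK f h).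
  by have := hK f h; rewrite inE negb_or => /andP [].
- by move=> b hb; apply: hg; rewrite inE hb orbT.
Qed.

Lemma provS_split Q D S A B V rho nu :
  (forall i, (i \in S) = (i \in A) || (i \in B)) ->
  (forall y j k, y \notin V -> j \in A -> k \in B -> y \in atom Q j -> y \in atom Q k -> False) ->
  provS Q D S V rho nu <-> provS Q D A V rho nu /\ provS Q D B V rho nu.
Proof.
move=> hS hdis; split.
  move=> [th [hV hi]]; split; exists th; split => // i hi'; apply: hi; by rewrite hS hi' ?orbT.
move=> [[th1 [hV1 h1]] [th2 [hV2 h2]]].
pose th y := if has (fun j => y \in atom Q j) A then th1 y else th2 y.
exists th; split.
  by move=> y hy; rewrite /th; case: ifP => _; [apply: hV1|apply: hV2].
move=> i; rewrite hS => /orP [hiA|hiB].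
  suff -> : map th (atom Q i) = map th1 (atom Q i) by apply: h1.
  apply/eq_in_map => y hy; rewrite /th; case: ifP => // /hasPn /(_ i hiA).
  by rewrite hy.
suff -> : map th (atom Q i) = map th2 (atom Q i) by apply: h2.
apply/eq_in_map => y hy; rewrite /th; case: ifP => // /hasP [j hj hyj].
case hyV: (y \in V); first by rewrite hV1 // hV2.
by case: (hdis y j i (negbT hyV) hj hiB hyj hy).
Qed.

Lemma provS_ground Q D G V rho nu :
  (forall i, i \in G -> ground Q V i) ->
  provS Q D G V rho nu <->
  (forall i, i \in G -> (i, map rho (atom Q i)) \in D /\ nu (i, map rho (atom Q i))).
Proof.
move=> hg; split; last by move=> h; exists rho.
move=> [th [hV h]] i hi.
suff <- : map th (atom Q i) = map rho (atom Q i) by apply: h.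
apply/eq_in_map => y hy; apply: hV.
by have /allP := hg i hi; apply.
Qed.

Lemma provS_or Q (D : database) (dom T V : seq nat) x i0 rho nu :
  (forall i, i \in T -> x \in atom Q i) -> i0 \in T -> x \notin V ->
  (forall f, f \in D -> forall c, c \in f.2 -> c \in dom) ->
  provS Q D T V rho nu <-> exists2 a, a \in dom & provS Q D T (x :: V) (updf rho x a) nu.
Proof.
move=> hx hi0 hxV hdom; split.
  move=> [th [hV h]]; exists (th x).
    have [hD _] := h i0 hi0.
    apply: (hdom _ hD) => /=; apply/mapP; exists x => //; exact: hx.
  exists th; split => // y; rewrite inE /updf => /orP [/eqP ->|hy]; first by rewrite eqxx.
  rewrite ifN ?hV //; by apply: contraNneq hxV => <-.
move=> [a ha [th [hV h]]]; exists th; split => // y hy.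
rewrite hV ?inE ?hy ?orbT // /updf ifN //; by apply: contraNneq hxV => <-.
Qed.

Lemma provS_ext Q D S S' V rho nu :
  (forall i, (i \in S) = (i \in S')) -> provS Q D S V rho nu <-> provS Q D S' V rho nu.
Proof.
move=> h; split => -[th [hV hi]]; exists th; split => // i hiS; apply: hi.
  by rewrite h. by rewrite -h.
Qed.

Lemma uniq_sand_disj a b (P1 P2 : fact -> Prop) :
  uniq (occ a) -> uniq (occ b) -> (forall f, f \in occ a -> P1 f) ->
  (forall f, f \in occ b -> P2 f) -> (forall f, P1 f -> P2 f -> False) ->
  uniq (occ (sand a b)).
Proof.
move=> ua ub h1 h2 h12; apply: (subseq_uniq (occ_sand _ _)).
rewrite cat_uniq ua ub andbT /=; apply/hasPn => f hf; apply/negP => hf'.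
exact: (h12 f (h1 f hf') (h2 f hf)).
Qed.

Lemma foldr_max Q d s :
  let r := foldr (fun y b => if cnt Q b <= cnt Q y then y else b) d s in
  (r = d \/ r \in s) /\ cnt Q d <= cnt Q r /\ forall y, y \in s -> cnt Q y <= cnt Q r.
Proof.
elim: s => [|z s [IH1 [IH2 IH3]]] /=; first by split; [left|].
case: ifP => h.
  split; first by right; rewrite mem_head.
  split; first by lia.
  move=> y; rewrite inE => /orP [/eqP ->|hy] //; have := IH3 y hy; lia.
split; first by case: IH1 => [->|hh]; [left|right; rewrite inE hh orbT].
split => // y; rewrite inE => /orP [/eqP ->|hy]; [lia|exact: IH3].
Qed.

Lemma pickmax_spec Q l : l != [::] ->
  pickmax Q l \in l /\ forall y, y \in l -> cnt Q y <= cnt Q (pickmax Q l).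
Proof.
rewrite /pickmax; case: l => [|d l] // _.
have [h1 [h2 h3]] := foldr_max Q d (d :: l).
split => //; case: h1 => [->|//]; exact: mem_head.
Qed.

Lemma count_le (p q : pred nat) l :
  (forall i, i \in l -> p i -> q i) -> count p l <= count q l.
Proof.
elim: l => [|z l IH] //= hpq.
have h1 : count p l <= count q l by apply: IH => i hi; apply: hpq; rewrite inE hi orbT.
have h2 : (p z : nat) <= q z.
  by case hz: (p z) => //; rewrite (hpq z (mem_head _ _) hz).
lia.
Qed.

Lemma count_lt (p q : pred nat) l :
  (forall i, i \in l -> p i -> q i) -> (exists2 i, i \in l & q i && ~~ p i) ->
  count p l < count q l.
Proof.
elim: l => [|z l IH] /= hpq [i]; first by [].
rewrite inE => /orP [/eqP ->|hi] hq.
  move: hq => /andP [-> /negbTE ->].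
  have : count p l <= count q l by apply: count_le => j hj; apply: hpq; rewrite inE hj orbT.
  lia.
have h1 : count p l < count q l.
  by apply: IH; [move=> j hj; apply: hpq; rewrite inE hj orbT|exists i].
have h2 : (p z : nat) <= q z.
  by case hz: (p z) => //; rewrite (hpq z (mem_head _ _) hz).
lia.
Qed.

Lemma hier_sep Q x y j k : hierarchical Q -> cnt Q y <= cnt Q x ->
  j < natoms Q -> k < natoms Q -> x \in atom Q j -> y \in atom Q j -> y \in atom Q k ->
  x \in atom Q k.
Proof.
move=> H hc hj hk hxj hyj hyk.
case: (H x y) => [hxy|[hyx|hd]].
- apply/negP => hxk.
  have : cnt Q x < cnt Q y.
    apply: count_lt => [i _|]; first exact: hxy.
    exists k; first by rewrite mem_iota.
    by rewrite /at_ hk hyk /= (negbTE (introN idP hxk)).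
  lia.
- by have /andP [] := hyx k (ltac:(by rewrite /at_ hk hyk)).
- by case: (hd j); rewrite /at_ hj hxj hyj.
Qed.

Definition vars Q := undup (flatten (atoms Q)).
Definition vcnt Q (V : seq nat) := count (fun y => y \notin V) (vars Q).

Lemma in_vars Q i y : i < natoms Q -> y \in atom Q i -> y \in vars Q.
Proof.
move=> hi hy; rewrite /vars mem_undup; apply/flattenP; exists (atom Q i) => //.
exact: mem_nth.
Qed.

Lemma vcnt_lt Q V x : x \in vars Q -> x \notin V -> vcnt Q (x :: V) < vcnt Q V.
Proof.
move=> hx hxV; apply: count_lt.
  by move=> i _; rewrite inE negb_or => /andP [].
by exists x => //; rewrite hxV inE eqxx.
Qed.

Lemma main_ind Q (D : database) (dom : seq nat) : hierarchical Q -> uniq dom ->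
  (forall f, f \in D -> forall c, c \in f.2 -> c \in dom) ->
  forall fuel (S V : seq nat) (rho : nat -> nat), size S + vcnt Q V < fuel -> (forall i, i \in S -> i < natoms Q) -> uniq S ->
  (forall nu, feval nu (evalp Q D dom (mkplan Q fuel S V) rho) <-> provS Q D S V rho nu) /\
  uniq (occ (evalp Q D dom (mkplan Q fuel S V) rho)) /\
  simple (evalp Q D dom (mkplan Q fuel S V) rho) /\
  (forall f, f \in occ (evalp Q D dom (mkplan Q fuel S V) rho) ->
     f.1 \in S /\ exists th, (forall y, y \in V -> th y = rho y) /\ f.2 = map th (atom Q f.1)).
Proof.
move=> H udom hdom; elim=> [|fu IH] S V rho hmu hS uS; first lia.
rewrite /=.
set G := [seq i <- S | ground Q V i].
set R := [seq i <- S | ~~ ground Q V i].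
have uG : uniq G by apply: filter_uniq.
have uR : uniq R by apply: filter_uniq.
have hGg : forall i, i \in G -> ground Q V i by move=> i; rewrite mem_filter => /andP [].
have hGS : forall i, i \in G -> i \in S by move=> i; rewrite mem_filter => /andP [].
have hRS : forall i, i \in R -> i \in S by move=> i; rewrite mem_filter => /andP [].
have hSGR : forall i, (i \in S) = (i \in G) || (i \in R).
  by move=> i; rewrite !mem_filter; case: (ground Q V i); rewrite /= ?orbF.
have leafsem : forall nu, feval nu (evalp Q D dom (leaves G) rho) <-> provS Q D G V rho nu.
  move=> nu; have := provS_ground D rho nu hGg; have := leaves_feval Q D dom G rho nu.
  tauto.
have leafocc : forall f, f \in occ (evalp Q D dom (leaves G) rho) ->
     f.1 \in G /\ exists th, (forall y, y \in V -> th y = rho y) /\ f.2 = map th (atom Q f.1).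
  by move=> f /leaves_occ [h1 h2]; split => //; exists rho.
case hU: [seq y <- flatten (map (atom Q) R) | y \notin V] => [|y0 U'].
  have eR : R = [::].
    case eR: R => [|j R'] //.
    have : j \in R by rewrite eR mem_head.
    rewrite mem_filter => /andP [hj _].
    move: hj => /allPn [y hy hyV].
    have : y \in [seq y <- flatten (map (atom Q) R) | y \notin V].
      rewrite mem_filter hyV /=; apply/flattenP; exists (atom Q j) => //.
      by apply/mapP; exists j => //; rewrite eR mem_head.
    by rewrite hU.
  have eS : forall i, (i \in S) = (i \in G) by move=> i; rewrite hSGR eR orbF.
  split; first by move=> nu; have := leafsem nu; have := provS_ext Q D V rho nu eS; tauto.
  split; first exact: leaves_uniq.
  split; first exact: leaves_simple.
  by move=> f /leafocc [h1 h2]; rewrite eS.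
set x := pickmax Q (y0 :: U').
have [xU xmax] := @pickmax_spec Q (y0 :: U') erefl.
rewrite -/x in xU xmax.
have xU' : x \in [seq y <- flatten (map (atom Q) R) | y \notin V] by rewrite hU.
have hUy : forall y j, y \notin V -> j \in R -> y \in atom Q j -> cnt Q y <= cnt Q x.
  move=> y j hyV hj hyj; apply: xmax; rewrite -hU mem_filter hyV /=.
  by apply/flattenP; exists (atom Q j) => //; apply/mapP; exists j.
move: xU'; rewrite mem_filter => /andP [hxV /flattenP [s0 /mapP [j0 hj0 ->] hxj0]].
set T := [seq i <- R | x \in atom Q i].
set R' := [seq i <- R | x \notin atom Q i].
have hTR : forall i, i \in T -> i \in R by move=> i; rewrite mem_filter => /andP [].
have hTx : forall i, i \in T -> x \in atom Q i by move=> i; rewrite mem_filter => /andP [].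
have hR'R : forall i, i \in R' -> i \in R by move=> i; rewrite mem_filter => /andP [].
have hR'x : forall i, i \in R' -> x \notin atom Q i by move=> i; rewrite mem_filter => /andP [].
have hRTR' : forall i, (i \in R) = (i \in T) || (i \in R').
  by move=> i; rewrite !mem_filter; case: (x \in atom Q i); rewrite /= ?orbF.
have uT : uniq T by apply: filter_uniq.
have uR' : uniq R' by apply: filter_uniq.
have j0T : j0 \in T by rewrite mem_filter hxj0.
have szR : size R <= size S by rewrite size_filter count_size.
have szT : size T <= size R by rewrite size_filter count_size.
have szR' : size R' < size R.
  have e : count (fun i => x \in atom Q i) R + count (fun i => x \notin atom Q i) R = size R
    := count_predC (fun i => x \in atom Q i) R.
  have : 0 < count (fun i => x \in atom Q i) R by rewrite -has_count; apply/hasP; exists j0.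
  rewrite /R' size_filter; lia.
have xvars : x \in vars Q by apply: (in_vars (hS j0 (hRS j0 hj0)) hxj0).
have hvc : vcnt Q (x :: V) < vcnt Q V := vcnt_lt xvars hxV.
have m1 : size T + vcnt Q (x :: V) < fu by lia.
have m2 : size R' + vcnt Q V < fu by lia.
have IH1 := fun a => IH T (x :: V) (updf rho x a) m1
   (fun i hi => hS i (hRS i (hTR i hi))) uT.
have IH2 := IH R' V rho m2 (fun i hi => hS i (hRS i (hR'R i hi))) uR'.
set P1 := mkplan Q fu T (x :: V).
set F1 := foldl (fun acc a => sor (evalp Q D dom P1 (updf rho x a)) acc) FFalse dom.
set F2 := evalp Q D dom (mkplan Q fu R' V) rho.
have -> : evalp Q D dom (PAnd (leaves G) (PAnd (POr x P1) (mkplan Q fu R' V))) rho =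
   sand (evalp Q D dom (leaves G) rho) (sand F1 F2) by [].
have F1occ : forall f, f \in occ F1 -> f.1 \in T /\
    exists th, (forall y, y \in V -> th y = rho y) /\ f.2 = map th (atom Q f.1).
  move=> f /foldl_sor_occ [//|[a ha hf]].
  have [_ [_ [_ h]]] := IH1 a.
  have [h1 [th [hth h2]]] := h f hf.
  split => //; exists th; split => // y hy; rewrite hth ?inE ?hy ?orbT // /updf ifN //.
  by apply: contraNneq hxV => <-.
have F2occ := (IH2.2.2.2).
split.
  move=> nu.
  have sp1 := @provS_split Q D S G R V rho nu hSGR
     (fun y j k hyV hj hk hyj hyk => ltac:(by have /allP /(_ y hyj) := hGg j hj; rewrite (negbTE hyV))).
  have sp2 := @provS_split Q D R T R' V rho nu hRTR'
     (fun y j k hyV hj hk hyj hyk => ltac:(by have := hR'x k hk;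
        rewrite (hier_sep H (hUy y j hyV (hTR j hj) hyj) (hS j (hRS j (hTR j hj)))
                   (hS k (hRS k (hR'R k hk))) (hTx j hj) hyj hyk))).
  have spor := @provS_or Q D dom T V x j0 rho nu hTx j0T hxV hdom.
  have f1 : feval nu F1 <-> exists2 a, a \in dom & provS Q D T (x :: V) (updf rho x a) nu.
    rewrite /F1 foldl_sor_feval /=; split.
      by move=> /hasP [a ha hfa]; exists a => //; apply/(IH1 a).1.
    by move=> [a ha hpa]; apply/hasP; exists a => //; apply/(IH1 a).1.
  have f2 := IH2.1 nu.
  have fl := leafsem nu.
  rewrite !feval_sand.
  split.
    move=> /andP [/fl hl /andP [/f1 h1 /f2 h2]].
    by apply/sp1; split => //; apply/sp2; split => //; apply/spor.
  move=> /sp1 [/fl -> /sp2 [/spor /f1 -> /f2 ->]] //.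
split.
  apply: (@uniq_sand_disj _ _ (fun f => f.1 \in G) (fun f => f.1 \in R)).
  - exact: leaves_uniq.
  - apply: (@uniq_sand_disj _ _ (fun f => f.1 \in T) (fun f => f.1 \in R')).
    + apply: (@foldl_sor_uniq _ (fun f => nth 0 f.2 (index x (atom Q f.1)))) => //.
      move=> a ha; have [_ [u1 [_ o1]]] := IH1 a; split => // f hf.
      have [h1 [th [hth h2]]] := o1 f hf.
      rewrite h2 (nth_map 0); last by rewrite index_mem; apply: hTx.
      by rewrite nth_index ?hth ?mem_head ?/updf ?eqxx //; apply: hTx.
    + exact: IH2.2.1.
    + by move=> f /F1occ [].
    + by move=> f /F2occ [].
    + move=> f hT hR; have := hR'x _ hR; by rewrite hTx.
  - by move=> f /leafocc [].
  - move=> f /(mem_subseq (occ_sand _ _)); rewrite mem_cat => /orP [/F1occ []|/F2occ []] h _.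
      exact: hTR.
    exact: hR'R.
  - move=> f hG hR; have := hGg _ hG.
    move: hR; rewrite mem_filter => /andP [/negbTE ->].
    by [].
split.
  apply: simple_sand; first exact: leaves_simple.
  apply: simple_sand; last exact: IH2.2.2.1.
  apply: foldl_sor_simple => // a _; exact: (IH1 a).2.2.1.
move=> f /(mem_subseq (occ_sand _ _)); rewrite mem_cat => /orP [/leafocc [h1 h2]|].
  by rewrite hGS.
move=> /(mem_subseq (occ_sand _ _)); rewrite mem_cat => /orP [/F1occ [h1 h2]|/F2occ [h1 h2]].
  by rewrite hRS ?hTR.
by rewrite hRS ?hR'R.
Qed.

Lemma feval_ext (nu nu' : fact -> bool) p : (forall f, f \in occ p -> nu f = nu' f) -> feval nu p = feval nu' p.
Proof.
elim: p => [g|a IHa b IHb|a IHa b IHb||] //= h.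
- by apply: h; rewrite mem_seq1.
- by rewrite IHa ?IHb // => f hf; apply: h; rewrite mem_cat hf ?orbT.
- by rewrite IHa ?IHb // => f hf; apply: h; rewrite mem_cat hf ?orbT.
Qed.

Lemma cf_allT (nu : fact -> bool) p : cf p -> (forall f, f \in occ p -> nu f) -> feval nu p.
Proof.
elim: p => [g|a IHa b IHb|a IHa b IHb||] //= hc h.
- by apply: h; rewrite mem_seq1.
- move: hc => /andP [ca cb].
  by rewrite IHa ?IHb // => f hf; apply: h; rewrite mem_cat hf ?orbT.
- move: hc => /andP [ca cb].
  by rewrite IHa // => f hf; apply: h; rewrite mem_cat hf ?orbT.
Qed.

Lemma cf_allF (nu : fact -> bool) p : cf p -> (forall f, f \in occ p -> ~~ nu f) -> ~~ feval nu p.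
Proof.
elim: p => [g|a IHa b IHb|a IHa b IHb||] //= hc h.
- by apply: h; rewrite mem_seq1.
- move: hc => /andP [ca cb].
  by rewrite negb_and IHa // => f hf; apply: h; rewrite mem_cat hf ?orbT.
- move: hc => /andP [ca cb].
  by rewrite negb_or IHa ?IHb // => f hf; apply: h; rewrite mem_cat hf ?orbT.
Qed.

Definition setv (nu : fact -> bool) (f : fact) (v : bool) : fact -> bool :=
  fun g => if g == f then v else nu g.

Lemma ess p f : cf p -> uniq (occ p) -> f \in occ p ->
  exists nu, feval (setv nu f true) p /\ ~~ feval (setv nu f false) p.
Proof.
elim: p => [g|a IHa b IHb|a IHa b IHb||] //=.
- move=> _ _; rewrite mem_seq1 => /eqP ->; exists (fun _ => true).
  by rewrite /setv eqxx.
- move=> /andP [ca cb]; rewrite cat_uniq => /andP [ua /andP [dab ub]].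
  rewrite mem_cat => /orP [hf|hf].
    have [nu [h1 h2]] := IHa ca ua hf.
    have fb : f \notin occ b by apply: contra dab => hb; apply/hasP; exists f.
    pose nu' : fact -> bool := fun g => if g \in occ b then true else nu g; exists nu'.
    have eA : forall v, feval (setv nu' f v) a =
                        feval (setv nu f v) a.
      move=> v; apply: feval_ext => g hg; rewrite /setv /nu'; case: (g == f) => //.
      by have -> : (g \in occ b) = false by apply/negP => hgb; move/negP: dab; apply; apply/hasP; exists g.
    have eB : forall v, feval (setv nu' f v) b.
      move=> v; apply: cf_allT => // g hg; rewrite /setv /nu' hg.
      by case: eqP => // e; move: fb; rewrite -e hg.
    by rewrite !eA !eB !andbT; split.
  have [nu [h1 h2]] := IHb cb ub hf.
  have fa : f \notin occ a by apply: contra dab => ha; apply/hasP; exists f.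
  pose nu' : fact -> bool := fun g => if g \in occ a then true else nu g; exists nu'.
  have eB : forall v, feval (setv nu' f v) b =
                      feval (setv nu f v) b.
    move=> v; apply: feval_ext => g hg; rewrite /setv /nu'; case: (g == f) => //.
    by have -> : (g \in occ a) = false by apply/negP => hga; move/negP: dab; apply; apply/hasP; exists g.
  have eA : forall v, feval (setv nu' f v) a.
    move=> v; apply: cf_allT => // g hg; rewrite /setv /nu' hg.
    by case: eqP => // e; move: fa; rewrite -e hg.
  by rewrite !eA !eB /=; split.
- move=> /andP [ca cb]; rewrite cat_uniq => /andP [ua /andP [dab ub]].
  rewrite mem_cat => /orP [hf|hf].
    have [nu [h1 h2]] := IHa ca ua hf.
    have fb : f \notin occ b by apply: contra dab => hb; apply/hasP; exists f.
    pose nu' : fact -> bool := fun g => if g \in occ b then false else nu g; exists nu'.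
    have eA : forall v, feval (setv nu' f v) a =
                        feval (setv nu f v) a.
      move=> v; apply: feval_ext => g hg; rewrite /setv /nu'; case: (g == f) => //.
      by have -> : (g \in occ b) = false by apply/negP => hgb; move/negP: dab; apply; apply/hasP; exists g.
    have eB : forall v, ~~ feval (setv nu' f v) b.
      move=> v; apply: cf_allF => // g hg; rewrite /setv /nu' hg.
      by case: eqP => // e; move: fb; rewrite -e hg.
    by rewrite !eA (negbTE (eB true)) (negbTE (eB false)) !orbF; split.
  have [nu [h1 h2]] := IHb cb ub hf.
  have fa : f \notin occ a by apply: contra dab => ha; apply/hasP; exists f.
  pose nu' : fact -> bool := fun g => if g \in occ a then false else nu g; exists nu'.
  have eB : forall v, feval (setv nu' f v) b =
                      feval (setv nu f v) b.
    move=> v; apply: feval_ext => g hg; rewrite /setv /nu'; case: (g == f) => //.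
    by have -> : (g \in occ a) = false by apply/negP => hga; move/negP: dab; apply; apply/hasP; exists g.
  have eA : forall v, ~~ feval (setv nu' f v) a.
    move=> v; apply: cf_allF => // g hg; rewrite /setv /nu' hg.
    by case: eqP => // e; move: fa; rewrite -e hg.
  by rewrite !eB (negbTE (eA true)) (negbTE (eA false)) /=; split.
Qed.

Lemma simple_occ_cf p f : simple p -> f \in occ p -> cf p.
Proof. by case: p. Qed.

Definition fuel0 Q := natoms Q + size (vars Q) + 1.
Definition theformula Q D dom :=
  evalp Q D dom (mkplan Q (fuel0 Q) (iota 0 (natoms Q)) [::]) (fun _ => 0).

Lemma math_final Q (D : database) (dom : seq nat) : hierarchical Q -> uniq dom ->
  (forall f, f \in D -> forall c, c \in f.2 -> c \in dom) ->
  minimal_prov Q D (theformula Q D dom) /\ len (theformula Q D dom) = nvar (theformula Q D dom).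
Proof.
move=> H udom hdom.
have hm : size (iota 0 (natoms Q)) + vcnt Q [::] < fuel0 Q.
  have : vcnt Q [::] <= size (vars Q) by apply: count_size.
  rewrite size_iota /fuel0; lia.
have [hsem [huniq [hsimp _]]] := @main_ind Q D dom H udom hdom (fuel0 Q) (iota 0 (natoms Q)) [::]
   (fun _ => 0) hm (fun i => ltac:(by rewrite mem_iota)) (iota_uniq _ _).
rewrite -/(theformula Q D dom) in hsem huniq hsimp.
set phi := theformula Q D dom in hsem huniq hsimp *.
have heq : equiv_prov Q D phi.
  move=> nu; split.
    move=> /(hsem nu) [th [_ h]]; exists th => i hi; apply: h; by rewrite mem_iota.
  move=> [th h]; apply/(hsem nu); exists th; split => // i; rewrite mem_iota => hi; exact: h.
have hlen : len phi = nvar phi by rewrite /len /nvar undup_id.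
split => //; split => // psi hpsi.
have sub : {subset occ phi <= undup (occ psi)}.
  move=> f hf; rewrite mem_undup; apply/negPn/negP => hfn.
  have cphi : cf phi by apply: simple_occ_cf hsimp hf.
  have [nu [h1 h2]] := ess cphi huniq hf.
  have e : forall v, feval (setv nu f v) psi = feval (setv nu f true) psi.
    move=> v; apply: feval_ext => g hg; rewrite /setv; case: eqP => // eg.
    by move: hfn; rewrite -eg hg.
  have e2 : forall nu', feval nu' phi = feval nu' psi.
    move=> nu'; apply/idP/idP => h.
      by apply/(hpsi nu')/(heq nu').
    by apply/(heq nu')/(hpsi nu').
  by move: h2; rewrite e2 e -e2 h1.
rewrite /len; exact: leq_trans (uniq_leq_size huniq sub) (size_undup _).
Qed.

Fixpoint cexp (t : tree) : expr :=
  match t with TNil => ENil | TCons a b => ECons (cexp a) (cexp b) end.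
Lemma eeval_cexp s t : eeval s (cexp t) = t.
Proof. by elim: t => //= a -> b ->. Qed.

Definition isTe (r : nat) (c : cmd) := IfT 14 (EHd (EHd (EVar r))) (IfT 14 (ETl (EHd (EVar r))) c).
Definition isFe (r : nat) (c : cmd) := IfT 14 (ETl (ETl (EHd (EVar r)))) c.

Definition SANDc : cmd :=
  CSeq (CAssign 34 (ECons (cexp (enc_nat 1)) (ECons (EVar 36) (EVar 38))))
 (CSeq (isTe 38 (CAssign 34 (EVar 36)))
 (CSeq (isTe 36 (CAssign 34 (EVar 38)))
 (CSeq (isFe 38 (CAssign 34 (cexp (enc_form FFalse))))
       (isFe 36 (CAssign 34 (cexp (enc_form FFalse))))))).

Definition SORc : cmd :=
  CSeq (CAssign 34 (ECons (cexp (enc_nat 2)) (ECons (EVar 36) (EVar 38))))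
 (CSeq (isFe 38 (CAssign 34 (EVar 36)))
 (CSeq (isFe 36 (CAssign 34 (EVar 38)))
 (CSeq (isTe 38 (CAssign 34 (cexp (enc_form FTrue))))
       (isTe 36 (CAssign 34 (cexp (enc_form FTrue))))))).

Definition alu_temps : pred nat := fun q => q \in [:: 14; 34].

Ltac rwh := repeat match goal with H : ?s ?r = enc_form _ |- context [?s ?r] => rewrite H end; simpl.
Ltac step2 := match goal with
 | |- sat (CSeq (CAssign _ _) _) _ _ => apply: sat_seqA
 | |- sat (CSeq _ _) _ _ => apply: sat_seq
 | |- sat (CAssign _ _) _ _ => apply: sat_assign
 | |- sat (isTe _ _) _ _ => rewrite /isTe
 | |- sat (isFe _ _) _ _ => rewrite /isFe
 | |- sat (IfT _ _ _) _ _ => apply: sat_if; simpl; rwh;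
        [ let H := fresh "H" in intro H; try (by case: (H erefl))
        | let H := fresh "H" in intro H; try (discriminate H) ]
 end; rewrite /= ?eeval_cexp.

Lemma SANDc_spec s A B : s 36 = enc_form A -> s 38 = enc_form B ->
  sat SANDc s (fun t s' => s' 34 = enc_form (sand A B) /\ frame alu_temps s s' /\ t <= 40).
Proof.
move=> hA hB; rewrite /SANDc.
case: A hA => [?|??|??||] hA; case: B hB => [?|??|??||] hB;
  repeat (step2; rewrite ?hA ?hB /=); (split; [by []|split; [frm|lia]]).
Qed.

Lemma SORc_spec s A B : s 36 = enc_form A -> s 38 = enc_form B ->
  sat SORc s (fun t s' => s' 34 = enc_form (sor A B) /\ frame alu_temps s s' /\ t <= 40).
Proof.
move=> hA hB; rewrite /SORc.
case: A hA => [?|??|??||] hA; case: B hB => [?|??|??||] hB;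
  repeat (step2; rewrite ?hA ?hB /=); (split; [by []|split; [frm|lia]]).
Qed.

Definition vreg (y : nat) := (2 * y).+1.
Definition outr (k : nat) := 40 + 8 * k.
Definition auxr (k : nat) := 42 + 8 * k.
Definition lstr (k : nat) := 44 + 8 * k.
Definition oldr (k : nat) := 46 + 8 * k.
Definition ctemps (k : nat) : pred nat := fun q =>
  (q \in [:: 2; 4; 6; 8; 10; 12; 14; 16; 18; 20; 34; 36; 38]) || ((40 + 8 * k <= q) && (q %% 2 == 0)).

Ltac ctl := rewrite /ctemps /mem_temps /teq_temps /alu_temps /outr /auxr /lstr /oldr /vreg ?inE; lia.
Ltac ifs := repeat (rewrite eqxx || (match goal with |- context [if ?a == ?b then _ else _] =>
     rewrite (@ifN _ (a == b)); last by (rewrite /outr /auxr /lstr /oldr /vreg; apply/eqP; lia) end)).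

Definition SANDw (a b o : nat) : cmd :=
  CSeq (CAssign 36 (EVar a)) (CSeq (CAssign 38 (EVar b)) (CSeq SANDc (CAssign o (EVar 34)))).
Definition SORw (a b o : nat) : cmd :=
  CSeq (CAssign 36 (EVar a)) (CSeq (CAssign 38 (EVar b)) (CSeq SORc (CAssign o (EVar 34)))).

Lemma SANDw_spec a b o s A B (W : pred nat) : s a = enc_form A -> s b = enc_form B ->
  b != 36 -> W 14 -> W 34 -> W 36 -> W 38 -> W o ->
  sat (SANDw a b o) s (fun t s' => s' o = enc_form (sand A B) /\ frame W s s' /\ t <= 43).
Proof.
move=> hA hB hb w14 w34 w36 w38 wo.
rewrite /SANDw; apply: sat_seqA; apply: sat_seqA; apply: sat_seq.
apply: sat_weak; last apply: (@SANDc_spec _ A B).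
- move=> t s1 [h34 [fr ht]]; apply: sat_assign; split; first by rewrite /= eqxx.
  split; last by lia.
  apply: frame_updR => //; apply: frame_trans; last first.
    by apply: frame_mono fr => q; rewrite /alu_temps !inE => /orP [] /eqP ->.
  by apply: frame_updR => //; apply: frame_updR.
- exact: hA.
- by rewrite /= (negbTE hb).
Qed.

Lemma SORw_spec a b o s A B (W : pred nat) : s a = enc_form A -> s b = enc_form B ->
  b != 36 -> W 14 -> W 34 -> W 36 -> W 38 -> W o ->
  sat (SORw a b o) s (fun t s' => s' o = enc_form (sor A B) /\ frame W s s' /\ t <= 43).
Proof.
move=> hA hB hb w14 w34 w36 w38 wo.
rewrite /SORw; apply: sat_seqA; apply: sat_seqA; apply: sat_seq.
apply: sat_weak; last apply: (@SORc_spec _ A B).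
- move=> t s1 [h34 [fr ht]]; apply: sat_assign; split; first by rewrite /= eqxx.
  split; last by lia.
  apply: frame_updR => //; apply: frame_trans; last first.
    by apply: frame_mono fr => q; rewrite /alu_temps !inE => /orP [] /eqP ->.
  by apply: frame_updR => //; apply: frame_updR.
- exact: hA.
- by rewrite /= (negbTE hb).
Qed.

Definition Ctx (D : database) (dom : seq nat) (rho : nat -> nat) (s : store) :=
  (forall y, s (vreg y) = enc_nat (rho y)) /\ s 32 = enc_db D /\ s 24 = enc_list (map enc_nat dom).

Lemma ctx_frame k D dom rho s s' : frame (ctemps k) s s' -> Ctx D dom rho s -> Ctx D dom rho s'.
Proof.
move=> fr [h1 [h2 h3]]; split; [|split].
- by move=> y; rewrite fr ?h1 //; ctl.
- by rewrite fr //; ctl.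
- by rewrite fr //; ctl.
Qed.

Definition argsexp (l : seq nat) : expr := foldr (fun y e => ECons (EVar (vreg y)) e) ENil l.
Lemma eeval_argsexp s l : eeval s (argsexp l) = enc_list (map (fun y => s (vreg y)) l).
Proof. by elim: l => //= y l ->. Qed.

Definition LEAF (Q : query) (i k : nat) : cmd :=
  CSeq (CAssign 34 (ECons (cexp (enc_nat i)) (argsexp (atom Q i))))
 (CSeq (MEM 34 32)
 (CSeq (CAssign 36 (cexp (enc_form FFalse)))
 (CSeq (IfT 14 (EVar 18) (CAssign 36 (ECons (cexp (enc_nat 0)) (EVar 34))))
       (CAssign (outr k) (EVar 36))))).

Lemma LEAF_spec Q D dom rho s i k : Ctx D dom rho s ->
  sat (LEAF Q i k) s (fun t s' => s' (outr k) = enc_form (evalp Q D dom (PLeaf i) rho) /\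
     frame (ctemps k) s s' /\ t <= lsum (enc_db D) + 20).
Proof.
move=> [hv [hD hdom]].
rewrite /LEAF; apply: sat_seqA; apply: sat_seq.
set f := (i, map rho (atom Q i)).
have h34 : upd s 34 (eeval s (ECons (cexp (enc_nat i)) (argsexp (atom Q i)))) 34 = enc_fact f.
  rewrite /= eeval_cexp eeval_argsexp /enc_fact /f /=; congr (TCons _ (enc_list _)).
  by rewrite -map_comp; apply: eq_map => y /=; rewrite hv.
apply: sat_weak; last apply: (@MEM_spec _ _ _ (map enc_fact D)) => //.
move=> t1 s1 [h18 [fr1 ht1]]; rewrite -/(enc_db D) in ht1.
have e34 : s1 34 = enc_fact f by rewrite fr1.
move: h18; rewrite h34 (mem_map enc_fact_inj) => h18.
apply: sat_seqA; apply: sat_seq; apply: sat_if.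
  move=> hne; apply: sat_assign; apply: sat_assign.
  rewrite /= h18 in hne.
  have fD : f \in D by move: hne; case: (f \in D).
  split; first by rewrite /= eqxx /= e34 -/f fD.
  split; last by lia.
  apply: frame_updR; last by ctl.
  apply: frame_trans; last by repeat (apply: frame_updR; last by ctl); exact: frame_refl.
  apply: frame_trans; last by apply: frame_mono fr1 => q; rewrite /mem_temps /teq_temps /ctemps !inE; lia.
  by apply: frame_updR; last by ctl.
move=> hne; apply: sat_assign.
rewrite /= h18 in hne.
have fD : f \in D = false by move: hne; case: (f \in D).
split; first by rewrite /= eqxx /= -/f fD.
split; last by lia.
apply: frame_updR; last by ctl.
apply: frame_trans; last by repeat (apply: frame_updR; last by ctl); exact: frame_refl.
apply: frame_trans; last by apply: frame_mono fr1 => q; rewrite /mem_temps /teq_temps /ctemps !inE; lia.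
by apply: frame_updR; last by ctl.
Qed.

Fixpoint compile (Q : query) (p : plan) (k : nat) : cmd :=
  match p with
  | PLeaf i => LEAF Q i k
  | PTrue => CAssign (outr k) (cexp (enc_form FTrue))
  | PAnd p1 p2 =>
      CSeq (compile Q p1 k.+1)
     (CSeq (CAssign (auxr k) (EVar (outr k.+1)))
     (CSeq (compile Q p2 k.+1)
           (SANDw (auxr k) (outr k.+1) (outr k))))
  | POr x p1 =>
      CSeq (CAssign (oldr k) (EVar (vreg x)))
     (CSeq (CAssign (auxr k) (cexp (enc_form FFalse)))
     (CSeq (CAssign (lstr k) (EVar 24))
     (CSeq (CWhile (EVar (lstr k))
              (CSeq (CAssign (vreg x) (EHd (EVar (lstr k))))
              (CSeq (CAssign (lstr k) (ETl (EVar (lstr k))))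
              (CSeq (compile Q p1 k.+1)
              (CSeq (SORw (outr k.+1) (auxr k) (outr k))
                    (CAssign (auxr k) (EVar (outr k))))))))
     (CSeq (CAssign (outr k) (EVar (auxr k)))
           (CAssign (vreg x) (EVar (oldr k)))))))
  end.

Fixpoint cost (ML nd : nat) (p : plan) : nat :=
  match p with
  | PLeaf _ => ML + 20
  | PTrue => 1
  | PAnd p1 p2 => cost ML nd p1 + cost ML nd p2 + 50
  | POr _ p1 => nd * (cost ML nd p1 + 50) + 10
  end.

Fixpoint tlen (t : tree) : nat := if t is TCons _ r then (tlen r).+1 else 0.
Lemma tlen_enc (l : seq tree) : tlen (enc_list l) = size l.
Proof. by elim: l => //= a l ->. Qed.

Definition Wsor k : pred nat := fun q => (q \in [:: 14; 34; 36; 38]) || (q == outr k).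

Lemma ctemps_mono k q : ctemps k.+1 q -> ctemps k q.
Proof. rewrite /ctemps !inE; lia. Qed.

Lemma compile_spec Q D dom p : forall k s rho, Ctx D dom rho s ->
  sat (compile Q p k) s (fun t s' => s' (outr k) = enc_form (evalp Q D dom p rho) /\
     frame (ctemps k) s s' /\ t <= cost (lsum (enc_db D)) (size dom) p).
Proof.
elim: p => [i|p1 IH1 p2 IH2|x p1 IH1|] k s rho hc.
- exact: LEAF_spec.
- rewrite /=; apply: sat_seq; apply: sat_weak; last exact: (IH1 k.+1 s rho hc).
  move=> t1 s1 [o1 [fr1 ht1]]; apply: sat_seqA.
  set s2 := upd s1 (auxr k) _.
  have fr12 : frame (ctemps k) s s2.
    apply: frame_updR; last by ctl.
    by apply: frame_mono fr1; apply: ctemps_mono.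
  have c2 := ctx_frame fr12 hc.
  apply: sat_seq; apply: sat_weak; last exact: (IH2 k.+1 s2 rho c2).
  move=> t2 s3 [o2 [fr2 ht2]].
  apply: sat_weak; last apply: (@SANDw_spec _ _ _ s3 (evalp Q D dom p1 rho) (evalp Q D dom p2 rho) (ctemps k)).
  + move=> t3 s4 [o4 [fr4 ht4]]; split => //; split; last by lia.
    apply: frame_trans fr4; apply: frame_trans fr12 _.
    by apply: frame_mono fr2; apply: ctemps_mono.
  + rewrite fr2; last by ctl.
    by rewrite /s2 /= eqxx.
  + exact: o2.
  + by rewrite /outr; lia.
  + by ctl.
  + by ctl.
  + by ctl.
  + by ctl.
  + by ctl.
- rewrite /=; apply: sat_seqA; apply: sat_seqA; apply: sat_seqA.
  set s1 := upd (upd (upd s (oldr k) _) (auxr k) _) (lstr k) _.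
  set g := fun a => evalp Q D dom p1 (updf rho x a).
  have [hv [hD hdom]] := hc.
  pose Inv (s2 : store) := (forall q, ~~ ctemps k q -> q != vreg x -> s2 q = s q) /\
     s2 (oldr k) = s (vreg x) /\ exists pre rest, dom = pre ++ rest /\
     s2 (lstr k) = enc_list (map enc_nat rest) /\
     s2 (auxr k) = enc_form (foldl (fun acc a => sor (g a) acc) FFalse pre).
  apply: sat_seq; apply: sat_weak; last first.
    apply: (@sat_while _ _ Inv (fun s2 => (cost (lsum (enc_db D)) (size dom) p1 + 50) * tlen (s2 (lstr k)))).
      split.
        move=> q hq hqx; rewrite /s1 /=; ifs; rewrite !ifN //; apply/eqP => e; move: hq; rewrite e; ctl.
      split; first by rewrite /s1 /=; ifs.
      exists [::], dom; split => //; split; first by rewrite /s1 /= eqxx hdom.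
      by rewrite /s1 /=; ifs.
    move=> s2 [f2 [o2 [pre [rest [ed [l2 a2]]]]]] hne.
    case: rest ed l2 => [|a rest] ed l2; first by rewrite /= l2 in hne.
    apply: sat_seqA; apply: sat_seqA.
    set s4 := upd (upd s2 (vreg x) _) (lstr k) _.
    have e4x : s4 (vreg x) = enc_nat a by rewrite /s4 /=; ifs; rewrite l2.
    have c4 : Ctx D dom (updf rho x a) s4.
      split; [|split].
      - move=> y; rewrite /updf; case: eqP => [->//|nyx].
        have hny : vreg y != vreg x by rewrite /vreg; apply/eqP; lia.
        rewrite /s4 /=; ifs. rewrite f2 ?hv //; ctl.
      - rewrite /s4 /=; ifs. rewrite f2 //; ctl.
      - rewrite /s4 /=; ifs. rewrite f2 //; ctl.
    apply: sat_seq; apply: sat_weak; last exact: (IH1 k.+1 s4 _ c4).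
    move=> t5 s5 [o5 [fr5 ht5]].
    apply: sat_seq.
    apply: sat_weak; last apply: (@SORw_spec _ _ _ s5 (g a) (foldl (fun acc a => sor (g a) acc) FFalse pre) (Wsor k)).
    + move=> t6 s6 [o6 [fr6 ht6]]; apply: sat_assign.
      set s7 := upd s6 _ _.
      have k5 : forall q, ~~ ctemps k.+1 q -> ~~ Wsor k q -> q != auxr k -> s7 q = s4 q.
        move=> q h1 h2 h3; rewrite /s7 /= (negbTE h3) fr6 // fr5 //.
      split; last by rewrite l2 /= k5; [rewrite /s4 /=; ifs; rewrite l2 /= !tlen_enc mulnS; lia|ctl|rewrite /Wsor !inE; ctl|rewrite /lstr /auxr; apply/eqP; lia].
      split.
        move=> q hq hqx.
        rewrite k5; [|by apply: contra hq; apply: ctemps_mono|by apply: contra hq; rewrite /Wsor !inE; ctl|by apply: contraNneq hq => ->; ctl].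
        rewrite /s4 /= !ifN //; [exact: f2|by apply: contraNneq hq => ->; ctl].
      split.
        rewrite k5; [|ctl|rewrite /Wsor !inE; ctl|rewrite /oldr /auxr; apply/eqP; lia].
        by rewrite /s4 /=; ifs.
      exists (pre ++ [:: a]), rest; split; first by rewrite ed -catA.
      split.
        rewrite k5; [|ctl|rewrite /Wsor !inE; ctl|rewrite /lstr /auxr; apply/eqP; lia].
        by rewrite /s4 /=; ifs; rewrite l2.
      rewrite /s7 /= eqxx o6 foldl_cat. done.
    + exact: o5.
    + rewrite fr5; last by ctl.
      by rewrite /s4 /=; ifs.
    + by rewrite /outr /=.
    + by rewrite /Wsor.
    + by rewrite /Wsor.
    + by rewrite /Wsor.
    + by rewrite /Wsor.
    + by rewrite /Wsor eqxx orbT.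
  move=> t2 s2 [[f2 [o2 [pre [rest [ed [l2 a2]]]]]] [hnil ht2]].
  case: rest ed l2 => [|? ?] ed l2; last by rewrite /= l2 in hnil.
  rewrite cats0 in ed; subst pre.
  apply: sat_seqA; apply: sat_assign.
  split; first by rewrite /=; ifs; rewrite a2.
  split.
    move=> q hq; rewrite /=.
    case: (eqVneq q (vreg x)) => [->|hqx].
      by ifs; exact: o2.
    rewrite ifN; first exact: f2.
    by apply: contraNneq hq => ->; ctl.
  move: ht2; rewrite /s1 /=; ifs; rewrite hdom tlen_enc size_map; lia.
- rewrite /=; apply: sat_assign; split; first by rewrite /= eqxx.
  split => //; apply: frame_updR; last by ctl.
  exact: frame_refl.
Qed.

Definition domAdd (acc : seq nat) (c : nat) := if c \in acc then acc else c :: acc.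
Definition domOf (D : database) : seq nat := foldl (fun acc f => foldl domAdd acc f.2) [::] D.
Definition allc (D : database) : seq nat := flatten (map snd D).

Lemma domAdd_uniq acc l : uniq acc -> uniq (foldl domAdd acc l).
Proof.
elim: l acc => [|c l IH] acc //= u; apply: IH; rewrite /domAdd; case: ifP => //= ->; by rewrite u.
Qed.
Lemma domAdd_mem acc l y : (y \in foldl domAdd acc l) = (y \in acc) || (y \in l).
Proof.
elim: l acc => [|c l IH] acc /=; first by rewrite orbF.
rewrite IH /domAdd inE.
case h: (c \in acc); case e: (y == c); rewrite ?inE ?e /= ?orbT ?orbF //.
by move/eqP: e => ->; rewrite h.
Qed.

Lemma domOf_gen (D : database) acc :
  uniq acc -> uniq (foldl (fun acc f => foldl domAdd acc f.2) acc D) /\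
  forall y, (y \in foldl (fun acc f => foldl domAdd acc f.2) acc D) = (y \in acc) || (y \in allc D).
Proof.
elim: D acc => [|f D IH] acc u /=; first by split => // y; rewrite orbF.
have [u' h'] := IH _ (domAdd_uniq f.2 u).
split => // y; rewrite h' domAdd_mem /allc /= mem_cat; by rewrite orbA.
Qed.

Lemma domOf_uniq D : uniq (domOf D). Proof. by have [] := @domOf_gen D [::] erefl. Qed.
Lemma domOf_mem D y : (y \in domOf D) = (y \in allc D). Proof. by have [_ ->] := @domOf_gen D [::] erefl. Qed.

Lemma domOf_cover (D : database) : forall f, f \in D -> forall c, c \in f.2 -> c \in domOf D.
Proof.
move=> f hf c hc; rewrite domOf_mem; apply/flattenP; exists f.2 => //; exact: map_f.
Qed.

Lemma size_le_enc (l : seq tree) : size l <= tree_size (enc_list l).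
Proof. elim: l => //= a l IH; lia. Qed.
Lemma mem_le_enc (l : seq tree) t : t \in l -> tree_size t <= tree_size (enc_list l).
Proof. elim: l => //= a l IH; rewrite inE => /orP [/eqP ->|/IH]; lia. Qed.

Lemma allc_size D : size (allc D) <= tree_size (enc_db D).
Proof.
elim: D => //= f D IH; rewrite /allc /= size_cat -/(allc D).
have := size_le_enc (map enc_nat f.2); rewrite size_map; rewrite /enc_db /= -/(enc_db D) in IH *.
rewrite /enc_fact /=; lia.
Qed.

Lemma allc_elem D c : c \in allc D -> tree_size (enc_nat c) <= tree_size (enc_db D).
Proof.
elim: D => //= f D IH; rewrite /allc /= mem_cat -/(allc D) => /orP [h|h].
  have := mem_le_enc (map_f enc_nat h); rewrite /enc_fact /=; lia.
have := IH h; rewrite /enc_db /=; lia.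
Qed.

Lemma lsum_le (l : seq tree) N : (forall t, t \in l -> tree_size t <= N) ->
  lsum (enc_list l) <= size l * (50 * N + 11).
Proof.
elim: l => //= a l IH h.
have h1 := h a (mem_head _ _).
have h2 := IH (fun t ht => h t (ltac:(by rewrite inE ht orbT))).
rewrite mulSn; lia.
Qed.

Definition inner_temps : pred nat := fun q => mem_temps q || (q \in [:: 24; 26; 28; 30]).
Definition dom_temps : pred nat := fun q => inner_temps q || (q == 22).

Definition INNER : cmd :=
  CWhile (EVar 26)
   (CSeq (CAssign 28 (EHd (EVar 26)))
   (CSeq (CAssign 26 (ETl (EVar 26)))
   (CSeq (MEM 28 24)
   (CSeq (CAssign 30 ETT)
   (CSeq (IfT 14 (EVar 18) (CAssign 30 ENil))
         (IfT 14 (EVar 30) (CAssign 24 (ECons (EVar 28) (EVar 24))))))))).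

Definition DOM : cmd :=
  CSeq (CAssign 22 (EVar 0))
 (CSeq (CAssign 24 ENil)
  (CWhile (EVar 22)
    (CSeq (CAssign 26 (ETl (EHd (EVar 22))))
    (CSeq (CAssign 22 (ETl (EVar 22))) INNER)))).

Definition Mb N := N * (50 * N + 11).

Lemma acc_bound D acc : uniq acc -> {subset acc <= allc D} ->
  lsum (enc_list (map enc_nat acc)) <= Mb (tree_size (enc_db D)).
Proof.
move=> u sub.
have h1 : size acc <= tree_size (enc_db D).
  exact: leq_trans (uniq_leq_size u sub) (allc_size D).
have h2 := @lsum_le (map enc_nat acc) (tree_size (enc_db D)).
rewrite size_map in h2.
have : lsum (enc_list (map enc_nat acc)) <= size acc * (50 * tree_size (enc_db D) + 11).
  apply: h2 => t /mapP [c hc ->]; apply: allc_elem; exact: sub.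
rewrite /Mb => h; apply: leq_trans h _; exact: leq_mul.
Qed.

Lemma INNER_spec D s (l acc : seq nat) :
  s 26 = enc_list (map enc_nat l) -> s 24 = enc_list (map enc_nat acc) ->
  uniq acc -> {subset acc <= allc D} -> {subset l <= allc D} ->
  sat INNER s (fun t s' => s' 24 = enc_list (map enc_nat (foldl domAdd acc l)) /\
     frame inner_temps s s' /\ t <= (Mb (tree_size (enc_db D)) + 20) * size l + 1).
Proof.
move=> h26 h24 u sa sl.
set Ci := Mb (tree_size (enc_db D)) + 20.
pose Inv (s2 : store) := frame inner_temps s s2 /\ exists pre rest, l = pre ++ rest /\
   s2 26 = enc_list (map enc_nat rest) /\ s2 24 = enc_list (map enc_nat (foldl domAdd acc pre)).
apply: sat_weak; last first.
  apply: (@sat_while _ _ Inv (fun s2 => Ci * tlen (s2 26))).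
    by split => //; exists [::], l.
  move=> s2 [fr2 [pre [rest [el [h26' h24']]]]] hne.
  case: rest el h26' => [|a rest] el h26'; first by rewrite /= h26' in hne.
  set acc' := foldl domAdd acc pre in h24'.
  have u' : uniq acc' by apply: domAdd_uniq.
  have sa' : {subset acc' <= allc D}.
    move=> y; rewrite domAdd_mem => /orP [/sa //|hy]; apply: sl; rewrite el mem_cat hy //.
  have hb := acc_bound u' sa'.
  apply: sat_seqA; apply: sat_seqA; apply: sat_seq.
  apply: sat_weak; last apply: (@MEM_spec _ _ _ (map enc_nat acc')) => //.
    all: try (by rewrite /= h24').
  move=> t1 s3 [h18 [fr3 ht3]].
  move: h18; rewrite /= h26' /= (mem_map enc_nat_inj) => h18.
  have e28 : s3 28 = enc_nat a by rewrite fr3 //= h26'.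
  have e26 : s3 26 = enc_list (map enc_nat rest) by rewrite fr3 //= h26'.
  have e24 : s3 24 = enc_list (map enc_nat acc') by rewrite fr3 //= h24'.
  have fr23 : frame inner_temps s s3.
    apply: frame_trans; last by apply: frame_mono fr3 => q hq; rewrite /inner_temps hq.
    apply: frame_updR; last by []. by apply: frame_updR.
  have eel : l = (pre ++ [:: a]) ++ rest by rewrite el -catA.
  apply: sat_seqA; apply: sat_seq.
  case ha: (a \in acc').
    apply: sat_if; rewrite /= h18 ha //= => _.
    apply: sat_assign; apply: sat_if; rewrite /= //= => _.
    split; last by rewrite e26 /= tlen_enc mulnS; lia.
    split; first by repeat (apply: frame_updR; last by []); exact: fr23.
    exists (pre ++ [:: a]), rest; split => //; split; first by rewrite /= e26.
    by rewrite /= e24 foldl_cat /= /domAdd -/acc' ha.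
  apply: sat_if; rewrite /= h18 ha //= => _.
  apply: sat_if; rewrite /= // => _.
  apply: sat_assign.
  split; last by rewrite /= e26 tlen_enc mulnS; lia.
  split; first by repeat (apply: frame_updR; last by []); exact: fr23.
  exists (pre ++ [:: a]), rest; split => //; split; first by rewrite /= e26.
  by rewrite /= e24 e28 foldl_cat /= /domAdd -/acc' ha.
move=> t s' [[fr [pre [rest [el [h26' h24']]]]] [hnil ht]].
case: rest el h26' => [|? ?] el h26'; last by rewrite /= h26' in hnil.
rewrite cats0 in el; subst pre.
split => //; split => //.
by move: ht; rewrite h26 tlen_enc size_map.
Qed.

Fixpoint ftot (C : nat) (t : tree) : nat :=
  match t with
  | TCons f r => C * tlen (match f with TCons _ a => a | TNil => TNil end) + 4 + ftot C r
  | TNil => 0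
  end.

Lemma ftot_enc C (D : database) : ftot C (enc_list (map enc_fact D)) = C * size (allc D) + 4 * size D.
Proof.
elim: D => [|f D IH] /=; first by rewrite muln0. rewrite IH /allc /= size_cat tlen_enc size_map -/(allc D).
rewrite mulnDr; lia.
Qed.

Lemma DOM_spec D s : s 0 = enc_db D ->
  sat DOM s (fun t s' => s' 24 = enc_list (map enc_nat (domOf D)) /\ frame dom_temps s s' /\
    t <= (Mb (tree_size (enc_db D)) + 20) * tree_size (enc_db D) + 4 * tree_size (enc_db D) + 3).
Proof.
move=> h0.
set Ci := Mb (tree_size (enc_db D)) + 20.
rewrite /DOM; apply: sat_seqA; apply: sat_seqA.
pose F (P : database) := foldl (fun acc f => foldl domAdd acc f.2) [::] P.
pose Inv (s2 : store) := frame dom_temps s s2 /\ exists P R, D = P ++ R /\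
   s2 22 = enc_list (map enc_fact R) /\ s2 24 = enc_list (map enc_nat (F P)).
apply: sat_weak; last first.
  apply: (@sat_while _ _ Inv (fun s2 => ftot Ci (s2 22))).
    split; first by repeat (apply: frame_updR; last by []); exact: frame_refl.
    by exists [::], D; rewrite /= h0.
  move=> s2 [fr2 [P [R [eD [h22 h24]]]]] hne.
  case: R eD h22 => [|f R] eD h22; first by rewrite /= h22 in hne.
  apply: sat_seqA; apply: sat_seqA.
  have [uF mF] := @domOf_gen P [::] erefl.
  apply: sat_weak; last apply: (@INNER_spec D _ f.2 (F P)).
  - move=> t s3 [h24' [fr3 ht3]].
    split.
      split.
        apply: frame_trans; last by apply: frame_mono fr3 => q hq; rewrite /dom_temps hq.
        by repeat (apply: frame_updR; last by []); exact: fr2.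
      exists (P ++ [:: f]), R; split; first by rewrite eD -catA.
      split; first by rewrite fr3 //= h22.
      by rewrite h24' /F foldl_cat.
    rewrite fr3 //= h22 /= tlen_enc size_map.
    move: ht3; rewrite -/Ci; lia.
  - by rewrite /= h22.
  - by rewrite /= h24.
  - exact: uF.
  - move=> y; rewrite mF /= => /flattenP [l /mapP [g hg ->] hy].
    apply/flattenP; exists g.2 => //; apply: map_f; by rewrite eD mem_cat hg.
  - move=> y hy; apply/flattenP; exists f.2 => //; apply: map_f; by rewrite eD mem_cat mem_head orbT.
move=> t s' [[fr [P [R [eD [h22 h24]]]]] [hnil ht]].
case: R eD h22 => [|? ?] eD h22; last by rewrite /= h22 in hnil.
rewrite cats0 in eD; subst P.
split; first exact: h24.
split; first by move=> q hq; rewrite fr.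
move: ht; rewrite /= h0 /enc_db ftot_enc.
have := allc_size D; have := size_le_enc (map enc_fact D); rewrite size_map -/(enc_db D).
move=> h1 h2 h3.
have : Ci * size (allc D) <= Ci * tree_size (enc_db D) by apply: leq_mul.
lia.
Qed.

Definition plan0 Q := mkplan Q (fuel0 Q) (iota 0 (natoms Q)) [::].
Definition PROG Q := CSeq (CAssign 32 (EVar 0)) (CSeq DOM (CSeq (compile Q (plan0 Q) 0) (CAssign 0 (EVar (outr 0))))).

Lemma lsum_size t : lsum t <= 61 * tree_size t.
Proof. elim: t => //= a _ b IH; lia. Qed.

Lemma cost_mono ML ML' nd nd' p : ML <= ML' -> nd <= nd' -> cost ML nd p <= cost ML' nd' p.
Proof.
move=> h1 h2; elim: p => //= [i|p1 IH1 p2 IH2|x p1 IH1]; try lia.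
have : nd * (cost ML nd p1 + 50) <= nd' * (cost ML' nd' p1 + 50) by apply: leq_mul => //; lia.
lia.
Qed.

Fixpoint Kc (p : plan) : nat :=
  match p with PLeaf _ => 81 | PTrue => 1 | PAnd p1 p2 => Kc p1 + Kc p2 + 50 | POr _ p1 => Kc p1 + 60 end.
Fixpoint hc (p : plan) : nat :=
  match p with PLeaf _ => 1 | PTrue => 0 | PAnd p1 p2 => maxn (hc p1) (hc p2) | POr _ p1 => (hc p1).+1 end.

Lemma expn_mono N a b : 0 < N -> a <= b -> N ^ a <= N ^ b.
Proof. by move=> hN hab; apply: leq_pexp2l. Qed.

Lemma cost_poly N p : 0 < N -> cost (61 * N) N p <= Kc p * N ^ hc p.
Proof.
move=> hN; elim: p => [i|p1 IH1 p2 IH2|x p1 IH1|] /=.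
- rewrite expn1; lia.
- have e1 : N ^ hc p1 <= N ^ maxn (hc p1) (hc p2) by apply: expn_mono => //; apply: leq_maxl.
  have e2 : N ^ hc p2 <= N ^ maxn (hc p1) (hc p2) by apply: expn_mono => //; apply: leq_maxr.
  have e0 : 1 <= N ^ maxn (hc p1) (hc p2) by rewrite expn_gt0 hN.
  have : Kc p1 * N ^ hc p1 <= Kc p1 * N ^ maxn (hc p1) (hc p2) by apply: leq_mul.
  have : Kc p2 * N ^ hc p2 <= Kc p2 * N ^ maxn (hc p1) (hc p2) by apply: leq_mul.
  rewrite !mulnDl; lia.
- have e0 : 1 <= N ^ hc p1 by rewrite expn_gt0 hN.
  rewrite expnS.
  have : N * (cost (61 * N) N p1 + 50) <= N * (Kc p1 * N ^ hc p1 + 50) by apply: leq_mul => //; lia.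
  have : N * 50 <= N * (N ^ hc p1 * 50) by apply: leq_mul => //; lia.
  rewrite !mulnDl !mulnDr; lia.
- lia.
Qed.

Lemma init_vreg inp y : init_store inp (vreg y) = enc_nat 0.
Proof. by rewrite /init_store /vreg. Qed.

Lemma prog_spec Q D : hierarchical Q ->
  sat (PROG Q) (init_store (enc_db D)) (fun t s' =>
    s' 0 = enc_form (theformula Q D (domOf D)) /\
    t <= (90 + Kc (plan0 Q)) * tree_size (enc_db D) ^ (maxn 3 (hc (plan0 Q)))).
Proof.
move=> H.
set N := tree_size (enc_db D).
have hN : 0 < N by rewrite /N; case: (enc_db D).
rewrite /PROG; apply: sat_seqA; apply: sat_seq.
apply: sat_weak; last by apply: (@DOM_spec D).
move=> t1 s2 [h24 [fr2 ht1]].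
have c2 : Ctx D (domOf D) (fun _ => 0) s2.
  split; [|split] => //.
  - move=> y; rewrite fr2; last by rewrite /dom_temps /inner_temps /mem_temps /teq_temps /vreg !inE; lia.
    by rewrite /= ifN // /vreg; lia.
  - by rewrite fr2.
apply: sat_seq; apply: sat_weak; last exact: (@compile_spec Q D (domOf D) (plan0 Q) 0 s2 _ c2).
move=> t2 s3 [o3 [fr3 ht2]]; apply: sat_assign.
split; first by rewrite /= o3.
have hdom : size (domOf D) <= N.
  apply: leq_trans (allc_size D); apply: uniq_leq_size; first exact: domOf_uniq.
  by move=> y; rewrite domOf_mem.
have hML : lsum (enc_db D) <= 61 * N by apply: lsum_size.
have hc1 := cost_mono (plan0 Q) hML hdom.
have hc2 := cost_poly (plan0 Q) hN.
set d := maxn 3 (hc (plan0 Q)).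
have e3 : N ^ 3 <= N ^ d by apply: expn_mono => //; apply: leq_maxl.
have eh : N ^ hc (plan0 Q) <= N ^ d by apply: expn_mono => //; apply: leq_maxr.
have hKc : Kc (plan0 Q) * N ^ hc (plan0 Q) <= Kc (plan0 Q) * N ^ d by apply: leq_mul.
have hN3 : Mb N * N + 20 * N + 4 * N + 3 <= 88 * N ^ 3.
  rewrite /Mb.
  have : 1 <= N by [].
  have h2 : N <= N * N by rewrite -{1}(muln1 N) leq_mul.
  have h3 : N * N <= N * N * N by rewrite -{1}(muln1 (N * N)) leq_mul.
  rewrite (_ : N ^ 3 = N * N * N); last by rewrite !expnS expn0 muln1 mulnA.
  rewrite !mulnDr !mulnDl; nia.
move: ht1; rewrite -/N mulnDl => ht1.
rewrite mulnDl; lia.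
Qed.

Theorem mainTheorem6 (Q : query) :
  hierarchical Q ->
  (exists (p : cmd) (c d : nat),
     forall D : database, uniq D ->
       exists (t : nat) (out : tree),
         runs p (enc_db D) t out /\
         t <= c * (tree_size (enc_db D)) ^ d /\
         exists phi : form, out = enc_form phi /\ minimal_prov Q D phi) /\
  (exists (p : cmd) (c d : nat),
     forall (D : database) (k : nat), uniq D ->
       exists (t : nat) (b : bool),
         runs p (TCons (enc_db D) (enc_nat k)) t (enc_bool b) /\
         t <= c * (tree_size (TCons (enc_db D) (enc_nat k))) ^ d /\
         (b = true <-> FACT Q D k)).
Proof.
move=> H; split.
  exists (PROG Q), (90 + Kc (plan0 Q)), (maxn 3 (hc (plan0 Q))).
  move=> D uD.
  have [t [s' [ex [o ht]]]] := prog_spec D H.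
  exists t, (s' 0); split; first by exists s'.
  split => //; exists (theformula Q D (domOf D)); split => //.
  exact: (math_final H (domOf_uniq D) (@domOf_cover D)).1.
exists (CAssign 0 (ECons ENil ENil)), 1, 0.
move=> D k uD; exists 1, true; split.
  exists (upd (init_store (TCons (enc_db D) (enc_nat k))) 0 (TCons TNil TNil)); split.
    exact: ExAssign.
  by [].  
split; first by rewrite expn0.
split => // _.
have [[hm _] hl] := math_final H (domOf_uniq D) (@domOf_cover D).
exists (theformula Q D (domOf D)); split => //.
by rewrite hl leq_addr.
Qed.
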